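(* Let $g\in\mathcal D$, let $Y_1,Y_2$ be i.i.d. with density $g$, let $k\in\mathbb N$ and define $h:[0,1)^2\to\mathbb R$ by $$h(y_1,y_2):=\sum_{j\in\mathbb Z:|j|\in[k]}(e_j(-y_1)-g_j)(e_j(y_2)-\overline{g_j}).$$ Then $h$ is real-valued, bounded, symmetric and satisfies $\mathbb E[h(Y_1,y_2)]=0$ for all $y_2\in[0,1)$. Moreover, with $\mathsf A:=8k$, $\mathsf B:=3\|g_\bullet\|_{\ell^2}(2k)^{3/4}$, $\mathsf C:=2\|g_\bullet\|_{\ell^2}(2k)^{1/2}$ and $\mathsf D:=\mathsf C$, one has $\sup_{y_1,y_2}|h(y_1,y_2)|\le\mathsf A$, $\sup_{y_2}\mathbb E h^2(Y_1,y_2)\le\mathsf B^2$, $\mathbb E h^2(Y_1,Y_2)\le\mathsf C^2$ and $\sup\{\mathbb E[h(Y_1,Y_2)\zeta(Y_1)\xi(Y_2)]:\mathbb E\zeta^2(Y_1)\le1,\mathbb E\xi^2(Y_2)\le1\}\le\mathsf D$. If in addition $L^2(g)=L^2_{\mathbb R}$, then the last inequality also holds with $\mathsf D:=4\|g_\bullet\|_{\ell^1}$.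
   Context: $L^2:=L^2([0,1))$ complex-valued square-integrable functions with $\langle h_1,h_2\rangle=\int_0^1h_1\overline{h_2}$. $e_j(x):=\exp(-\mathrm i2\pi jx)$, $h_j:=\langle h,e_j\rangle$ for $j\in\mathbb Z$; $\|h_\bullet\|_{\ell^p}:=(\sum_{j\in\mathbb Z}|h_j|^p)^{1/p}$. $\mathcal D$ is the set of real-valued probability densities on $[0,1)$ in $L^2$. $[k]:=\{1,\dots,k\}$. For a density $g$, $L^2(g)$ is the set of real-valued Borel functions $u$ on $[0,1)$ with $\int_0^1u^2g<\infty$, and $L^2_{\mathbb R}:=L^2(\mathbb 1_{[0,1)})$. The suprema over $\zeta,\xi$ range over real Borel functions. *)

(* Defs.v *)
From HB Require Import structures.
From mathcomp Require Import all_boot all_order all_algebra.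
From mathcomp Require Import all_classical all_reals all_analysis.
From mathcomp Require Import complex.
Set Implicit Arguments. Unset Strict Implicit. Unset Printing Implicit Defensive.
Import Order.TTheory GRing.Theory Num.Theory.
Import numFieldNormedType.Exports.
Local Open Scope classical_set_scope.
Local Open Scope ring_scope.
Local Open Scope complex_scope.

Section Defs.
Variable R : realType.
Local Notation mu := (@lebesgue_measure R).

Definition I01 : set R := `[0%R, 1%R[.

Definition is_density_L2 (g : R -> R) : Prop :=
  [/\ measurable_fun I01 g,
      (forall x, I01 x -> 0 <= g x),
      (\int[mu]_(x in I01) (g x)%:E = 1)%E &
      (\int[mu]_(x in I01) ((g x) ^+ 2)%:E < +oo)%E].

(** e_j(x) = exp(-i 2 pi j x), written via Euler's formula *)
Definition e_ (j : int) (x : R) : R[i] :=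
  (cos (2 * pi * j%:~R * x)) -i* (sin (2 * pi * j%:~R * x)).

(** Fourier coefficient h_j = <h, e_j> = int_0^1 h(x) conj(e_j(x)) dx,
    for real-valued h (real and imaginary parts integrated separately) *)
Definition fcoef (h : R -> R) (j : int) : R[i] :=
  (Rintegral mu I01 (fun x => h x * cos (2 * pi * j%:~R * x)))
  +i* (Rintegral mu I01 (fun x => h x * sin (2 * pi * j%:~R * x))).

Definition lp_norm (p : R) (h : R -> R) : \bar R :=
  (poweR (\esum_(j in [set: int]) ((complex.Re `|fcoef h j|) `^ p)%:E) p^-1)%E.

Definition hker (g : R -> R) (k : nat) (y1 y2 : R) : R[i] :=
  \sum_(j <- [seq j <- [seq (n%:Z - k%:Z)%R | n <- iota 0 (2 * k).+1]
                    | (1 <= `|j|%N <= k)%N])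
    (e_ j (- y1) - fcoef g j) * (e_ j y2 - (fcoef g j)^*).

Definition expect1 (g : R -> R) (f : R -> R) : \bar R :=
  (\int[mu]_(x in I01) (f x * g x)%:E)%E.

(** expectation of f(Y1,Y2) for Y1, Y2 i.i.d. with density g on [0,1)
    (joint density g(y1) g(y2) w.r.t. the product Lebesgue measure) *)
Definition expect2 (g : R -> R) (f : R -> R -> R) : \bar R :=
  (\int[(mu \x mu)%E]_(z in I01 `*` I01) (f z.1 z.2 * g z.1 * g z.2)%:E)%E.

Definition L2w (g : R -> R) : set (R -> R) :=
  [set u : R -> R | measurable_fun I01 u /\ (expect1 g (fun x => (u x ^+ 2)%R) < +oo)%E].

Definition L2R : set (R -> R) := L2w (fun _ => 1).

End Defs.

Arguments I01 {R}.
Arguments L2R {R}.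

(* Main.v *)
Require Import Defs.
From HB Require Import structures.
From mathcomp Require Import all_boot all_order all_algebra.
From mathcomp Require Import all_classical all_reals all_analysis.
From mathcomp Require Import complex.
From mathcomp Require Import measurable_realfun.
From mathcomp Require Import ring lra zify.
From Stdlib Require Import Lia.
Import Order.TTheory GRing.Theory Num.Theory.
Import numFieldNormedType.Exports.
Local Open Scope classical_set_scope.
Local Open Scope ring_scope.
Local Open Scope complex_scope.
Section Integ.
Variable R : realType.
Local Notation mu := (@lebesgue_measure R).
Variable g : R -> R.
Hypothesis hg : is_density_L2 g.

Definition Ew (f : R -> R) : R := Rintegral mu I01 (fun x => f x * g x).
Definition gi (f : R -> R) : Prop := mu.-integrable I01 (EFin \o (fun x => f x * g x)).
Definition Bd (f : R -> R) : Prop :=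
  measurable_fun I01 f /\ exists M : R, forall x, I01 x -> `|f x| <= M.
Definition L2 (f : R -> R) : Prop :=
  measurable_fun I01 f /\ mu.-integrable I01 (EFin \o (fun x => f x ^+ 2 * g x)).

Lemma mI01 : measurable (I01 : set (measurableTypeR R)).
Proof. have : measurable (I01 : set R) by exact: measurable_itv. exact. Qed.
Hint Resolve mI01 : core.

Lemma g_ge0 {x : R} : I01 x -> 0 <= g x.
Proof. by case: hg => _ H _ _; apply: H. Qed.

Lemma mg : measurable_fun (I01 : set R) g.
Proof. by case: hg. Qed.

Lemma g_int : mu.-integrable I01 (EFin \o g).
Proof.
case: hg => m0 g0 g1 _; apply/integrableP; split.
  have : measurable_fun (I01 : set R) (EFin \o g) by exact/measurable_EFinP.
  exact.
have -> : (\int[mu]_(x in I01) `|(EFin \o g) x|)%E = (\int[mu]_(x in I01) (g x)%:E)%E.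
  by apply: eq_integral => x; rewrite inE => /g0 gx; rewrite /= ger0_norm.
by rewrite g1 ltry.
Qed.



Lemma meas_fg {f : R -> R} : measurable_fun (I01 : set R) f ->
  measurable_fun (I01 : set (measurableTypeR R)) (EFin \o (fun x => f x * g x)).
Proof.
move=> mf; have : measurable_fun (I01 : set R) (EFin \o (fun x => f x * g x)).
  by apply/measurable_EFinP; apply: measurable_funM => //; exact: mg.
exact.
Qed.

Lemma Bd_gi {f} : Bd f -> gi f.
Proof.
case=> mf [M hM].
rewrite /gi; apply: (le_integrable mI01 (meas_fg mf) _ (integrableZl mI01 M g_int)).
move=> x Ix; rewrite /= lee_fin normrM (ger0_norm (g_ge0 Ix)).
apply: (le_trans _ (ler_norm _)).
by apply: ler_wpM2r; [exact: g_ge0|exact: hM].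
Qed.

Lemma L2_int {f} : L2 f -> mu.-integrable I01 (EFin \o (fun x => f x ^+ 2 * g x + g x)).
Proof.
case=> mf i2.
by apply: (eq_integrable mI01 _ _ _ (integrableD mI01 i2 g_int)) => x _.
Qed.

Lemma absle_sq1 (a : R) : `|a| <= a ^+ 2 + 1.
Proof.
case: (lerP `|a| 1) => h.
  by apply: (le_trans h); rewrite lerDr sqr_ge0.
rewrite -real_normK ?num_real//; apply: ler_wpDr => //.
by rewrite expr2 ler_peMl // ltW.
Qed.

Lemma L2_gi {f} : L2 f -> gi f.
Proof.
move=> hf; have [mf _] := hf.
rewrite /gi; apply: (le_integrable mI01 (meas_fg mf) _ (L2_int hf)).
move=> x Ix; rewrite /= lee_fin normrM (ger0_norm (g_ge0 Ix)).
apply: (le_trans _ (ler_norm _)).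
rewrite -[X in _ <= _ + X]mul1r -mulrDl.
by apply: ler_wpM2r; [exact: g_ge0|exact: absle_sq1].
Qed.

Lemma L2Bd_gi {f h} : L2 f -> Bd h -> gi (fun x => f x * h x).
Proof.
move=> hf [mh [M hM]]; have [mf _] := hf.
have mfh : measurable_fun I01 (fun x => f x * h x)
  by exact: measurable_funM.
rewrite /gi; apply: (le_integrable mI01 (meas_fg mfh) _ (integrableZl mI01 M (L2_int hf))).
move=> x Ix; rewrite /= lee_fin.
apply: (le_trans _ (ler_norm _)); rewrite !normrM (ger0_norm (g_ge0 Ix)).
have M0 : 0 <= M by apply: le_trans (hM x Ix).
rewrite -[X in _ <= _ * (_ + X)]mul1r -mulrDl mulrA.
apply: ler_wpM2r; first exact: g_ge0.
rewrite mulrC; apply: ler_pM => //; first exact: hM.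
exact: absle_sq1.
Qed.

Lemma giD {f1 f2} : gi f1 -> gi f2 -> gi (fun x => f1 x + f2 x).
Proof.
move=> h1 h2; rewrite /gi.
by apply: (eq_integrable mI01 _ _ _ (integrableD mI01 h1 h2)) => x _ /=; rewrite mulrDl.
Qed.

Lemma giZ r {f} : gi f -> gi (fun x => r * f x).
Proof.
move=> h; rewrite /gi.
by apply: (eq_integrable mI01 _ _ _ (integrableZl mI01 r h)) => x _ /=; rewrite -EFinM mulrA.
Qed.

Lemma gi0 : gi (fun=> 0).
Proof.
rewrite /gi.
by apply: (eq_integrable mI01 _ _ _ (integrableZl mI01 0 g_int)) => x _ /=; rewrite -EFinM !mul0r.
Qed.

Lemma gi_sum (I : Type) (s : seq I) (F : I -> R -> R) :
  (forall i, gi (F i)) -> gi (fun x => \sum_(i <- s) F i x).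
Proof.
move=> hF; elim: s => [|i s IH].
  by under [X in gi X]funext => x do rewrite big_nil; exact: gi0.
under [X in gi X]funext => x do rewrite big_cons.
exact: giD.
Qed.

Lemma EwD {f1 f2} : gi f1 -> gi f2 -> Ew (fun x => f1 x + f2 x) = Ew f1 + Ew f2.
Proof.
move=> h1 h2; rewrite /Ew -RintegralD //.
by apply: eq_Rintegral => x _; rewrite mulrDl.
Qed.

Lemma EwZ r {f} : gi f -> Ew (fun x => r * f x) = r * Ew f.
Proof.
move=> h; rewrite /Ew -RintegralZl //.
by apply: eq_Rintegral => x _; rewrite mulrA.
Qed.

Lemma Ew0 : Ew (fun=> 0) = 0.
Proof.
rewrite /Ew (eq_Rintegral _ (g := fun=> 0)); last by move=> x _; rewrite mul0r.
by rewrite /Rintegral integral0.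
Qed.

Lemma Ew_sum (I : Type) (s : seq I) (F : I -> R -> R) :
  (forall i, gi (F i)) -> Ew (fun x => \sum_(i <- s) F i x) = \sum_(i <- s) Ew (F i).
Proof.
move=> hF; elim: s => [|i s IH].
  by under [X in Ew X]funext => x do rewrite big_nil; rewrite big_nil Ew0.
under [X in Ew X]funext => x do rewrite big_cons.
by rewrite EwD ?big_cons ?IH //; exact: gi_sum.
Qed.

Lemma Ew_le {f1 f2} : gi f1 -> gi f2 -> (forall x, I01 x -> f1 x <= f2 x) -> Ew f1 <= Ew f2.
Proof.
move=> h1 h2 h; apply: le_Rintegral => // x Ix.
by apply: ler_wpM2r; [exact: g_ge0|exact: h].
Qed.

Lemma Ew_ge0 f : (forall x, I01 x -> 0 <= f x) -> 0 <= Ew f.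
Proof. by move=> h; apply: Rintegral_ge0 => x Ix; apply: mulr_ge0 (h x Ix) (g_ge0 Ix). Qed.

Lemma Ew1 : Ew (fun=> 1) = 1.
Proof.
case: hg => _ _ g1 _.
rewrite /Ew; have -> : Rintegral mu I01 (fun x => 1 * g x) = Rintegral mu I01 g.
  by apply: eq_Rintegral => x _; rewrite mul1r.
by rewrite /Rintegral g1.
Qed.

Lemma gi1 : gi (fun=> 1).
Proof.
rewrite /gi.
by apply: (eq_integrable mI01 _ _ _ g_int) => x _ /=; rewrite mul1r.
Qed.

Lemma expect1E {f} : gi f -> expect1 g f = (Ew f)%:E.
Proof. by move=> h; rewrite /Ew /Rintegral fineK //; exact: integrable_fin_num. Qed.


Lemma BdM {f h} : Bd f -> Bd h -> Bd (fun x => f x * h x).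
Proof.
move=> [mf [M hM]] [mh [N hN]]; split; first exact: measurable_funM.
exists (M * N) => x Ix; rewrite normrM; apply: ler_pM => //; [exact: hM|exact: hN].
Qed.

Lemma BdD {f h} : Bd f -> Bd h -> Bd (fun x => f x + h x).
Proof.
move=> [mf [M hM]] [mh [N hN]]; split; first exact: measurable_funD.
exists (M + N) => x Ix; apply: (le_trans (ler_normD _ _)); apply: lerD; [exact: hM|exact: hN].
Qed.

Lemma Bd_cst c : Bd (fun=> c).
Proof. by split; [exact: measurable_cst|exists `|c|]. Qed.

Lemma BdZ c {f} : Bd f -> Bd (fun x => c * f x).
Proof. by move=> hf; apply: BdM => //; exact: Bd_cst. Qed.

Lemma BdB {f h} : Bd f -> Bd h -> Bd (fun x => f x - h x).
Proof.
move=> hf hh; have := BdD hf (BdZ (-1) hh).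
by congr Bd; apply: funext => x; rewrite mulN1r.
Qed.

Lemma Bd_sum (I : Type) (s : seq I) (F : I -> R -> R) :
  (forall i, Bd (F i)) -> Bd (fun x => \sum_(i <- s) F i x).
Proof.
move=> hF; elim: s => [|i s IH].
  by under [X in Bd X]funext => x do rewrite big_nil; exact: Bd_cst.
under [X in Bd X]funext => x do rewrite big_cons.
exact: BdD.
Qed.

Lemma quad_disc (a b c : R) : 0 <= a ->
  (forall t, 0 <= c - 2 * t * b + t ^+ 2 * a) -> b ^+ 2 <= c * a.
Proof.
move=> a0 H; case: (eqVneq a 0) => [a00|an0].
  subst a; case: (eqVneq b 0) => [->|bn0]; first by rewrite expr0n mulr0.
  have := H ((c + 1) / (2 * b)).
  have -> : c - 2 * ((c + 1) / (2 * b)) * b + ((c + 1) / (2 * b)) ^+ 2 * 0 = -1.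
    by field.
  by rewrite oppr_ge0 ler10.
have ap : 0 < a by rewrite lt_def an0.
have := H (b / a).
have -> : c - 2 * (b / a) * b + (b / a) ^+ 2 * a = (c * a - b ^+ 2) * a^-1 by field.
by rewrite pmulr_lge0 ?invr_gt0 // subr_ge0.
Qed.

Lemma L2_gi2 {z} : L2 z -> gi (fun x => z x ^+ 2).
Proof. by case. Qed.

Lemma Ew_CS {z F} : L2 z -> Bd F ->
  Ew (fun x => z x * F x) ^+ 2 <= Ew (fun x => z x ^+ 2) * Ew (fun x => F x ^+ 2).
Proof.
move=> hz hF.
have gz2 := L2_gi2 hz.
have gzF := L2Bd_gi hz hF.
have gF2 : gi (fun x => F x ^+ 2).
  by apply: Bd_gi; under [X in Bd X]funext => x do rewrite expr2; exact: BdM.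
apply: quad_disc; first by apply: Ew_ge0 => x _; exact: sqr_ge0.
move=> t.
have := @Ew_ge0 (fun x => (z x - t * F x) ^+ 2) (fun x _ => sqr_ge0 _).
have -> : (fun x => (z x - t * F x) ^+ 2) = (fun x => z x ^+ 2 +
   ((- 2 * t) * (z x * F x) + t ^+ 2 * (F x ^+ 2))).
  by apply: funext => x; ring.
rewrite EwD //; last by apply: giD; apply: giZ.
rewrite EwD; [|exact: giZ|exact: giZ].
rewrite !EwZ //.
suff -> : Ew (fun x => z x ^+ 2) - 2 * t * Ew (fun x => z x * F x) +
  t ^+ 2 * Ew (fun x => F x ^+ 2) = Ew (fun x => z x ^+ 2) +
  (- 2 * t * Ew (fun x => z x * F x) + t ^+ 2 * Ew (fun x => F x ^+ 2)) by [].
ring.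
Qed.

Local Notation mR := (measurableTypeR R).

Lemma prod_int (a b : R -> R) :
  measurable_fun (setT : set mR) a -> measurable_fun (setT : set mR) b ->
  mu.-integrable setT (EFin \o a) -> mu.-integrable setT (EFin \o b) ->
  (mu \x mu)%E.-integrable setT (fun z : mR * mR => (a z.1 * b z.2)%:E) /\
  (\int[mu \x mu]_z (a z.1 * b z.2)%:E =
    \int[mu]_x (a x)%:E * \int[mu]_x (b x)%:E)%E.
Proof.
move=> ma mb ia ib.
have mab : measurable_fun setT (fun z : mR * mR => (a z.1 * b z.2)%:E).
  apply/measurable_EFinP; apply: measurable_funM.
    exact: measurableT_comp ma measurable_fst.
  exact: measurableT_comp mb measurable_snd.
have iab : (mu \x mu)%E.-integrable setT (fun z : mR * mR => (a z.1 * b z.2)%:E).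
  apply/(integrable12ltyP mu mu mab).
  have ma' : measurable_fun setT (fun x : mR => (`|a x|)%:E).
    by apply/measurable_EFinP; exact: measurableT_comp.
  have mb' : measurable_fun setT (fun x : mR => (`|b x|)%:E).
    by apply/measurable_EFinP; exact: measurableT_comp.
  have -> : (fun x : mR => \int[mu]_y `|(a (x, y).1 * b (x, y).2)%:E|)%E =
            (fun x : mR => (`|a x|)%:E * \int[mu]_y (`|b y|)%:E)%E.
    apply: funext => x /=.
    rewrite -ge0_integralZl_EFin //; apply: eq_integral => y _.
    by rewrite /= normrM.
  rewrite ge0_integralZr //; last exact: integral_ge0.
  apply: lte_mul_pinfty; first exact: integral_ge0.
    by move/integrableP: ia => [_]; rewrite ge0_fin_numE ?integral_ge0.
  by move/integrableP: ib => [_].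
split => //.
rewrite -(integral12_prod_meas1 iab) /fubini_F /=.
have fb := integrable_fin_num measurableT ib.
have -> : (fun x : mR => \int[mu]_y (a x * b y)%:E)%E =
          (fun x : mR => (a x)%:E * \int[mu]_y (b y)%:E)%E.
  apply: funext => x.
  by rewrite -integralZl //; apply: eq_integral => y _.
have fb' : (\int[mu]_y (b y)%:E)%E \is a fin_num by exact: fb.
rewrite -(fineK fb') integralZr //.
Qed.

Lemma gi_restr {F : R -> R} : measurable_fun (I01 : set R) F -> gi F ->
  measurable_fun (setT : set mR) ((fun x => F x * g x) \_ I01) /\
  mu.-integrable setT (EFin \o ((fun x => F x * g x) \_ I01)) /\
  (\int[mu]_x (((fun x => F x * g x) \_ I01) x)%:E)%E = (Ew F)%:E.
Proof.
move=> mF iF.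
have mFg : measurable_fun (I01 : set mR) (fun x => F x * g x).
  have : measurable_fun (I01 : set R) (fun x => F x * g x).
    by apply: measurable_funM => //; exact: mg.
  exact.
split; first exact/(measurable_restrictT _ _).1.
split.
  by rewrite -restrict_EFin; apply/(integrable_mkcond _ _).1.
rewrite /Ew /Rintegral fineK; last exact: integrable_fin_num.
rewrite integral_mkcond; apply: eq_integral => x _.
by rewrite restrict_EFin.
Qed.

Lemma prodI01 (F G : R -> R) (z : mR * mR) :
  ((fun z : mR * mR => (F z.1 * G z.2 * g z.1 * g z.2)%:E) \_ (I01 `*` I01)) z =
  (((fun x => F x * g x) \_ I01) z.1 * ((fun x => G x * g x) \_ I01) z.2)%:E.
Proof.
rewrite /patch in_setX.
case: (z.1 \in I01); case: (z.2 \in I01) => /=; rewrite ?mul0r ?mulr0 //.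
by congr EFin; ring.
Qed.

Lemma expect2_prod1 {F G : R -> R} :
  measurable_fun (I01 : set R) F -> measurable_fun (I01 : set R) G -> gi F -> gi G ->
  (mu \x mu)%E.-integrable (I01 `*` I01)
     (fun z : mR * mR => (F z.1 * G z.2 * g z.1 * g z.2)%:E) /\
  (\int[mu \x mu]_(z in I01 `*` I01) (F z.1 * G z.2 * g z.1 * g z.2)%:E)%E
    = (Ew F * Ew G)%:E.
Proof.
move=> mF mG iF iG.
have [ma [ia Ia]] := gi_restr mF iF.
have [mb [ib Ib]] := gi_restr mG iG.
have [iab Iab] := prod_int _ _ ma mb ia ib.
have mD : measurable (I01 `*` I01 : set (mR * mR)) by exact: measurableX.
split.
  apply/(integrable_mkcond _ mD).
  by apply: (eq_integrable _ _ _ _ iab) => // z _; rewrite prodI01.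
rewrite integral_mkcond.
rewrite (eq_integral (fun z : mR * mR =>
  (((fun x => F x * g x) \_ I01) z.1 * ((fun x => G x * g x) \_ I01) z.2)%:E)); last first.
  by move=> z _; rewrite prodI01.
by rewrite Iab Ia Ib.
Qed.

Lemma expect2_sum (I : Type) (s : seq I) (F G : I -> R -> R) :
  (forall i, measurable_fun (I01 : set R) (F i)) ->
  (forall i, measurable_fun (I01 : set R) (G i)) ->
  (forall i, gi (F i)) -> (forall i, gi (G i)) ->
  expect2 g (fun y1 y2 => \sum_(i <- s) F i y1 * G i y2) =
  (\sum_(i <- s) Ew (F i) * Ew (G i))%:E.
Proof.
move=> mF mG iF iG; rewrite /expect2.
have mD : measurable (I01 `*` I01 : set (mR * mR)) by exact: measurableX.
rewrite (eq_integral (fun z : mR * mR => \sum_(i <- s)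
   (F i z.1 * G i z.2 * g z.1 * g z.2)%:E)%E); last first.
  by move=> z _; rewrite sumEFin !big_distrl.
rewrite integral_sum //; last first.
  by move=> i; have [] := expect2_prod1 (mF i) (mG i) (iF i) (iG i).
rewrite -sumEFin; apply: eq_bigr => i _.
by have [] := expect2_prod1 (mF i) (mG i) (iF i) (iG i).
Qed.

Definition cs (j : int) : R := Rintegral mu I01 (fun x => g x * cos (2 * pi * j%:~R * x)).
Definition sn (j : int) : R := Rintegral mu I01 (fun x => g x * sin (2 * pi * j%:~R * x)).
Definition cosf (j : int) (x : R) : R := cos (2 * pi * j%:~R * x).
Definition sinf (j : int) (x : R) : R := sin (2 * pi * j%:~R * x).
Definition raw (p : int * bool) (x : R) : R := if p.2 then cosf p.1 x else sinf p.1 x.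
Definition vv (p : int * bool) : R := if p.2 then cs p.1 else sn p.1.
Definition phi (p : int * bool) (x : R) : R := raw p x - vv p.
Definition MM (p q : int * bool) : R :=
  match p.2, q.2 with
  | true, true => (cs (p.1 - q.1) + cs (p.1 + q.1)) / 2
  | false, false => (cs (p.1 - q.1) - cs (p.1 + q.1)) / 2
  | true, false => (sn (p.1 + q.1) - sn (p.1 - q.1)) / 2
  | false, true => (sn (p.1 - q.1) + sn (p.1 + q.1)) / 2
  end.

Lemma meas_lin (c : R) : measurable_fun (setT : set R) (fun x : R => c * x).
Proof. exact: measurable_funM. Qed.

Lemma Bd_raw p : Bd (raw p).
Proof.
rewrite /raw; case: p.2; split.
- apply: (measurable_funS _ (@subsetT _ I01)) => //.
  have mc : measurable_fun (setT : set R) cos := continuous_measurable_fun (@continuous_cos R).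
  exact: measurableT_comp mc (meas_lin _).
- by exists 1 => x _; exact: cos_max.
- apply: (measurable_funS _ (@subsetT _ I01)) => //.
  have mc : measurable_fun (setT : set R) sin := continuous_measurable_fun (@continuous_sin R).
  exact: measurableT_comp mc (meas_lin _).
- by exists 1 => x _; exact: sin_max.
Qed.

Lemma Bd_phi p : Bd (phi p).
Proof. exact: BdB (Bd_raw p) (Bd_cst _). Qed.

Lemma Ew_raw p : Ew (raw p) = vv p.
Proof.
by rewrite /Ew /raw /vv; case: p.2; apply: eq_Rintegral => x _; rewrite mulrC.
Qed.

Lemma Ew_phi p : Ew (phi p) = 0.
Proof.
rewrite /phi; have -> : (fun x => raw p x - vv p) = (fun x => raw p x + (- vv p) * 1).
  by apply: funext => x; rewrite mulr1.
rewrite EwD; [|exact: Bd_gi (Bd_raw p)|exact: giZ gi1].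
rewrite EwZ; last exact: gi1.
by rewrite Ew1 Ew_raw mulr1 subrr.
Qed.

Lemma Ew_half {u v : R -> R} (s : R) : gi u -> gi v ->
  Ew (fun x => (1 / 2) * (u x + s * v x)) = (1 / 2) * (Ew u + s * Ew v).
Proof.
move=> iu iv; rewrite EwZ; last by apply: giD => //; exact: giZ.
by rewrite EwD ?EwZ //; exact: giZ.
Qed.

Lemma gic m : gi (cosf m). Proof. exact: (Bd_gi (Bd_raw (m, true))). Qed.
Lemma gis m : gi (sinf m). Proof. exact: (Bd_gi (Bd_raw (m, false))). Qed.
Lemma Ewc m : Ew (cosf m) = cs m. Proof. exact: (Ew_raw (m, true)). Qed.
Lemma Ews m : Ew (sinf m) = sn m. Proof. exact: (Ew_raw (m, false)). Qed.
Lemma Ewc' m : Ew (fun x => cosf m x) = cs m. Proof. exact: (Ew_raw (m, true)). Qed.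
Lemma Ews' m : Ew (fun x => sinf m x) = sn m. Proof. exact: (Ew_raw (m, false)). Qed.

Lemma argB (j l : int) (x : R) :
  2 * pi * (j - l)%:~R * x = 2 * pi * j%:~R * x - 2 * pi * l%:~R * x.
Proof. rewrite intrB; ring. Qed.
Lemma argD (j l : int) (x : R) :
  2 * pi * (j + l)%:~R * x = 2 * pi * j%:~R * x + 2 * pi * l%:~R * x.
Proof. rewrite intrD; ring. Qed.

Lemma Ew_rawM p q : Ew (fun x => raw p x * raw q x) = MM p q.
Proof.
case: p => j a; case: q => l b; rewrite /raw /MM /=.
case: a; case: b.
- have -> : (fun x => cosf j x * cosf l x) =
    (fun x => (1 / 2) * (cosf (j - l) x + 1 * cosf (j + l) x)).
    by apply: funext => x; rewrite /cosf argB argD cosB cosD; field.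
  by rewrite Ew_half; [rewrite !Ewc; field|exact: gic|exact: gic].
- have -> : (fun x => cosf j x * sinf l x) =
    (fun x => (1 / 2) * (sinf (j + l) x + (-1) * sinf (j - l) x)).
    by apply: funext => x; rewrite /cosf /sinf argB argD sinB sinD; field.
  by rewrite Ew_half; [rewrite !Ews; field|exact: gis|exact: gis].
- have -> : (fun x => sinf j x * cosf l x) =
    (fun x => (1 / 2) * (sinf (j - l) x + 1 * sinf (j + l) x)).
    by apply: funext => x; rewrite /cosf /sinf argB argD sinB sinD; field.
  by rewrite Ew_half; [rewrite !Ews; field|exact: gis|exact: gis].
- have -> : (fun x => sinf j x * sinf l x) =
    (fun x => (1 / 2) * (cosf (j - l) x + (-1) * cosf (j + l) x)).
    by apply: funext => x; rewrite /cosf /sinf argB argD cosB cosD; field.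
  by rewrite Ew_half; [rewrite !Ewc; field|exact: gic|exact: gic].
Qed.

Lemma Gam p q : Ew (fun x => phi p x * phi q x) = MM p q - vv p * vv q.
Proof.
have -> : (fun x => phi p x * phi q x) = (fun x => raw p x * raw q x +
   ((- vv q) * raw p x + ((- vv p) * raw q x + (vv p * vv q) * 1))).
  by apply: funext => x; rewrite /phi; ring.
have ip := Bd_gi (Bd_raw p); have iq := Bd_gi (Bd_raw q).
rewrite EwD; last first.
- by apply: giD; [exact: giZ|apply: giD; apply: giZ => //; exact: gi1].
- exact: Bd_gi (BdM (Bd_raw p) (Bd_raw q)).
rewrite EwD; [|exact: giZ|by apply: giD; apply: giZ => //; exact: gi1].
rewrite EwD; [|exact: giZ|by apply: giZ; exact: gi1].
rewrite !EwZ //; last exact: gi1.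
rewrite Ew_rawM !Ew_raw Ew1; ring.
Qed.

Lemma ReM (a b : R[i]) : complex.Re (a * b) = complex.Re a * complex.Re b - complex.Im a * complex.Im b.
Proof. by case: a => ? ?; case: b. Qed.
Lemma ImM (a b : R[i]) : complex.Im (a * b) = complex.Re a * complex.Im b + complex.Im a * complex.Re b.
Proof. by case: a => ? ?; case: b. Qed.
Lemma ReB (a b : R[i]) : complex.Re (a - b) = complex.Re a - complex.Re b.
Proof. by case: a => ? ?; case: b. Qed.
Lemma ImB (a b : R[i]) : complex.Im (a - b) = complex.Im a - complex.Im b.
Proof. by case: a => ? ?; case: b. Qed.
Lemma ReD (a b : R[i]) : complex.Re (a + b) = complex.Re a + complex.Re b.
Proof. by case: a => ? ?; case: b. Qed.
Lemma ImD (a b : R[i]) : complex.Im (a + b) = complex.Im a + complex.Im b.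
Proof. by case: a => ? ?; case: b. Qed.
Lemma Re_sum (I : Type) (s : seq I) (F : I -> R[i]) :
  complex.Re (\sum_(i <- s) F i) = \sum_(i <- s) complex.Re (F i).
Proof. elim: s => [|i s IH]; first by rewrite !big_nil. by rewrite !big_cons ReD IH. Qed.
Lemma Im_sum (I : Type) (s : seq I) (F : I -> R[i]) :
  complex.Im (\sum_(i <- s) F i) = \sum_(i <- s) complex.Im (F i).
Proof. elim: s => [|i s IH]; first by rewrite !big_nil. by rewrite !big_cons ImD IH. Qed.

Variable k : nat.
Definition Jk : seq int :=
  [seq j <- [seq (n%:Z - k%:Z)%R | n <- iota 0 (2 * k).+1] | (1 <= `|j|%N <= k)%N].

Lemma hkerE y1 y2 : hker g k y1 y2 = \sum_(j <- Jk)
  (e_ j (- y1) - fcoef g j) * (e_ j y2 - (fcoef g j)^*).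
Proof. by []. Qed.

Lemma hker_Re y1 y2 : complex.Re (hker g k y1 y2) = \sum_(j <- Jk)
  (phi (j, true) y1 * phi (j, true) y2 + phi (j, false) y1 * phi (j, false) y2).
Proof.
rewrite hkerE Re_sum; apply: eq_bigr => j _.
rewrite ReM !ReB !ImB /e_ /fcoef /phi /raw /vv /cosf /sinf /=.
rewrite !mulrN cosN sinN -/(cs j) -/(sn j); ring.
Qed.

Lemma hker_Im y1 y2 : complex.Im (hker g k y1 y2) = \sum_(j <- Jk)
  (phi (j, false) y1 * phi (j, true) y2 - phi (j, true) y1 * phi (j, false) y2).
Proof.
rewrite hkerE Im_sum; apply: eq_bigr => j _.
rewrite ImM !ReB !ImB /e_ /fcoef /phi /raw /vv /cosf /sinf /=.
rewrite !mulrN cosN sinN -/(cs j) -/(sn j); ring.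
Qed.

Definition Mseq (m : nat) : seq int := [seq (n%:Z - m%:Z)%R | n <- iota 0 (2 * m).+1].

Lemma memM m x : (x \in Mseq m) = (`|x| <= m)%N.
Proof.
apply/mapP/idP.
  by case=> n; rewrite mem_iota add0n => hn ->; lia.
move=> hx; exists (absz (x + m%:Z)%R); first by rewrite mem_iota add0n; lia.
lia.
Qed.

Lemma uniqM m : uniq (Mseq m).
Proof.
rewrite map_inj_uniq ?iota_uniq // => a b /= h; lia.
Qed.

Lemma memJ x : (x \in Jk) = (1 <= `|x| <= k)%N.
Proof. rewrite mem_filter memM; apply/andP/idP => [[]//|h]; split => //; lia. Qed.

Lemma uniqJ : uniq Jk.
Proof. exact/filter_uniq/uniqM. Qed.

Lemma sizeJ : (size Jk <= 2 * k)%N.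
Proof.
rewrite size_filter.
change (count (fun j : int => (1 <= `|j| <= k)%N) (Mseq k) <= 2 * k)%N.
have e := count_predC (fun j : int => (1 <= `|j| <= k)%N) (Mseq k).
rewrite /Mseq size_map size_iota -/(Mseq k) in e.
have : (0 < count (predC (fun j : int => (1 <= `|j| <= k)%N)) (Mseq k))%N.
  rewrite -has_count; apply/hasP; exists 0%R; first by rewrite memM.
  by [].
lia.
Qed.

Lemma sub_sum (s t : seq int) (f : int -> R) : uniq s -> {subset s <= t} -> uniq t ->
  (forall x, 0 <= f x) -> \sum_(i <- s) f i <= \sum_(i <- t) f i.
Proof.
move=> us st ut f0.
rewrite [X in _ <= X](bigID (fun i => i \in s)) /= -[\sum_(i <- t | i \in s) f i]big_filter.
have -> : \sum_(i <- [seq i <- t | i \in s]) f i = \sum_(i <- s) f i.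
  apply: perm_big; apply: uniq_perm; [exact: filter_uniq|exact: us|].
  by move=> x; rewrite mem_filter; apply/andP/idP => [[]//|h]; split => //; exact: st.
by rewrite lerDl; apply: sumr_ge0 => i _.
Qed.

Lemma permJ : perm_eq Jk (map -%R Jk).
Proof.
apply: uniq_perm; [exact: uniqJ|rewrite map_inj_uniq ?uniqJ //; exact: oppr_inj|].
move=> x; rewrite -{2}(opprK x) (mem_map oppr_inj) !memJ abszN //.
Qed.

Lemma sum_cst {I : Type} (s : seq I) (c : R) : \sum_(i <- s) c = (size s)%:R * c.
Proof.
elim: s => [|i s IH]; first by rewrite big_nil mul0r.
by rewrite big_cons IH /= -nat1r mulrDl mul1r.
Qed.

Lemma CS_seq {I : Type} (s : seq I) (a b : I -> R) :
  (\sum_(i <- s) a i * b i) ^+ 2 <= (\sum_(i <- s) b i ^+ 2) * (\sum_(i <- s) a i ^+ 2).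
Proof.
apply: quad_disc; first by apply: sumr_ge0 => i _; exact: sqr_ge0.
move=> t.
have -> : \sum_(i <- s) b i ^+ 2 - 2 * t * (\sum_(i <- s) a i * b i) +
    t ^+ 2 * (\sum_(i <- s) a i ^+ 2) = \sum_(i <- s) (b i - t * a i) ^+ 2.
  rewrite mulr_sumr mulr_sumr -sumrN -!big_split /=.
  by apply: eq_bigr => i _; ring.
by apply: sumr_ge0 => i _; exact: sqr_ge0.
Qed.

Lemma CS_ones {I : Type} (s : seq I) (a : I -> R) :
  (\sum_(i <- s) a i) ^+ 2 <= (size s)%:R * \sum_(i <- s) a i ^+ 2.
Proof.
have := CS_seq s a (fun=> 1).
by under eq_bigr do rewrite mulr1; under [X in _ <= X * _]eq_bigr do rewrite expr1n; rewrite sum_cst mulr1.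
Qed.

Lemma CS4 (a1 a2 a3 a4 b1 b2 b3 b4 : R) :
  (a1 * b1 + a2 * b2 + a3 * b3 + a4 * b4) ^+ 2 <=
  (b1 ^+ 2 + b2 ^+ 2 + b3 ^+ 2 + b4 ^+ 2) * (a1 ^+ 2 + a2 ^+ 2 + a3 ^+ 2 + a4 ^+ 2).
Proof.
apply: quad_disc; first by rewrite !addr_ge0 ?sqr_ge0.
move=> t.
have -> : b1 ^+ 2 + b2 ^+ 2 + b3 ^+ 2 + b4 ^+ 2 -
  2 * t * (a1 * b1 + a2 * b2 + a3 * b3 + a4 * b4) +
  t ^+ 2 * (a1 ^+ 2 + a2 ^+ 2 + a3 ^+ 2 + a4 ^+ 2) =
  (b1 - t * a1) ^+ 2 + (b2 - t * a2) ^+ 2 + (b3 - t * a3) ^+ 2 + (b4 - t * a4) ^+ 2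
  by ring.
by rewrite !addr_ge0 ?sqr_ge0.
Qed.

Lemma sq_le_sq (x y : R) : 0 <= y -> x ^+ 2 <= y ^+ 2 -> x <= y.
Proof.
move=> y0 h; case: (lerP x 0) => [x0|x0]; first exact: le_trans x0 y0.
by rewrite -(ler_pXn2r (n := 2)) // ?nnegrE // ltW.
Qed.

Lemma block_ineq (A B A' B' x y z w : R) : x ^+ 2 + y ^+ 2 <= 1 -> z ^+ 2 + w ^+ 2 <= 1 ->
  ((A + A') / 2 - x * z) ^+ 2 + ((B' - B) / 2 - x * w) ^+ 2 +
  ((B + B') / 2 - y * z) ^+ 2 + ((A - A') / 2 - y * w) ^+ 2 <=
  (A ^+ 2 + B ^+ 2) + (A' ^+ 2 + B' ^+ 2) + (x ^+ 2 + y ^+ 2) + (z ^+ 2 + w ^+ 2).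
Proof.
move=> h1 h2.
set p := x * z + y * w; set q := y * z - x * w.
set p' := x * z - y * w; set q' := y * z + x * w.
have -> : ((A + A') / 2 - x * z) ^+ 2 + ((B' - B) / 2 - x * w) ^+ 2 +
  ((B + B') / 2 - y * z) ^+ 2 + ((A - A') / 2 - y * w) ^+ 2 =
  ((A - p) ^+ 2 + (B - q) ^+ 2 + (A' - p') ^+ 2 + (B' - q') ^+ 2) / 2.
  by rewrite /p /q /p' /q'; field.
have hpq : p ^+ 2 + q ^+ 2 + p' ^+ 2 + q' ^+ 2 = 2 * ((x ^+ 2 + y ^+ 2) * (z ^+ 2 + w ^+ 2)).
  by rewrite /p /q /p' /q'; ring.
have e1 : forall U V : R, (U - V) ^+ 2 <= 2 * U ^+ 2 + 2 * V ^+ 2.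
  move=> U V; have := sqr_ge0 (U + V); lra.
have hxy : 0 <= x ^+ 2 + y ^+ 2 by rewrite addr_ge0 ?sqr_ge0.
have hzw : 0 <= z ^+ 2 + w ^+ 2 by rewrite addr_ge0 ?sqr_ge0.
have e2 : 2 * ((x ^+ 2 + y ^+ 2) * (z ^+ 2 + w ^+ 2)) <= (x ^+ 2 + y ^+ 2) + (z ^+ 2 + w ^+ 2).
  nra.
have := e1 A p; have := e1 B q; have := e1 A' p'; have := e1 B' q'.
lra.
Qed.

Lemma absmul_le {A N x E : R} : `|A| <= N -> `|x| <= E -> A * x <= N * E.
Proof.
move=> hA hx; apply: (le_trans (ler_norm _)); rewrite normrM.
by apply: ler_pM => //; exact: normr_ge0.
Qed.

Lemma half_abs (p q r s : R) : `|p * r + q * s| <= (p ^+ 2 + q ^+ 2 + (r ^+ 2 + s ^+ 2)) / 2.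
Proof.
apply/ler_normlP; split.
  have := sqr_ge0 (p + r); have := sqr_ge0 (q + s); lra.
have := sqr_ge0 (p - r); have := sqr_ge0 (q - s); lra.
Qed.

Lemma blockM_ineq (A B A' B' N N' p q r s : R) :
  `|A| <= N -> `|B| <= N -> `|A'| <= N' -> `|B'| <= N' ->
  p * r * ((A + A') / 2) + p * s * ((B' - B) / 2) + q * r * ((B + B') / 2) +
  q * s * ((A - A') / 2) <= (N + N') / 2 * ((p ^+ 2 + q ^+ 2) + (r ^+ 2 + s ^+ 2)).
Proof.
move=> hA hB hA' hB'.
set P := (p ^+ 2 + q ^+ 2) + (r ^+ 2 + s ^+ 2).
have h1 := half_abs p q r s.
have h2 : `|q * r - p * s| <= P / 2.
  have := half_abs q (- p) r s; rewrite /P; congr (_ <= _); [by rewrite mulNr|]; rewrite sqrrN.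
  by congr (_ / _); ring.
have h3 : `|p * r - q * s| <= P / 2.
  have := half_abs p (- q) r s; rewrite /P; congr (_ <= _); [by rewrite mulNr|]; rewrite sqrrN.
  by congr (_ / _); ring.
have h4 : `|p * s + q * r| <= P / 2.
  have := half_abs p q s r; rewrite /P; congr (_ <= _); by congr (_ / _); ring.
have := absmul_le hA h1; have := absmul_le hB h2.
have := absmul_le hA' h3; have := absmul_le hB' h4.
rewrite -/P; lra.
Qed.

Definition N2 (m : int) : R := cs m ^+ 2 + sn m ^+ 2.
Definition Nm (m : int) : R := Num.sqrt (N2 m).

Lemma N2_ge0 m : 0 <= N2 m.
Proof. by rewrite /N2 addr_ge0 ?sqr_ge0. Qed.

Lemma L2_1 : L2 (fun=> 1).
Proof.
split; first exact: measurable_cst.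
by apply: (eq_integrable mI01 _ _ _ g_int) => x _ /=; rewrite expr1n mul1r.
Qed.

Lemma Ew_cst c : Ew (fun=> c) = c.
Proof.
have -> : (fun=> c) = (fun x : R => c * 1) by apply: funext => x; rewrite mulr1.
by rewrite EwZ ?Ew1 ?mulr1 //; exact: gi1.
Qed.

Lemma gi_cst c : gi (fun=> c).
Proof.
have -> : (fun=> c) = (fun x : R => c * 1) by apply: funext => x; rewrite mulr1.
exact: giZ gi1.
Qed.

Lemma trig_cs (c s a b : R) : a ^+ 2 + b ^+ 2 = 1 -> (c * a + s * b) ^+ 2 <= c ^+ 2 + s ^+ 2.
Proof.
move=> h; have := sqr_ge0 (c * b - s * a).
have -> : c ^+ 2 + s ^+ 2 = (c ^+ 2 + s ^+ 2) * (a ^+ 2 + b ^+ 2) by rewrite h mulr1.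
move=> h2; have e : (c ^+ 2 + s ^+ 2) * (a ^+ 2 + b ^+ 2) =
  (c * a + s * b) ^+ 2 + (c * b - s * a) ^+ 2 by ring.
by rewrite e lerDl.
Qed.

Lemma N2le1 j : N2 j <= 1.
Proof.
pose F := fun x => cs j * cosf j x + sn j * sinf j x.
have BF : Bd F by apply: BdD; apply: BdZ; [exact: (Bd_raw (j, true))|exact: (Bd_raw (j, false))].
have := Ew_CS L2_1 BF.
have -> : Ew (fun x => 1 * F x) = N2 j.
  have -> : (fun x => 1 * F x) = F by apply: funext => x; rewrite mul1r.
  rewrite /F EwD; [|exact: giZ (gic j)|exact: giZ (gis j)].
  rewrite !EwZ; [|exact: gis|exact: gic].
  by rewrite ?Ewc ?Ews ?Ewc' ?Ews' /N2 !expr2.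
have -> : Ew (fun x => 1 ^+ 2) = 1.
  by rewrite -[RHS](Ew_cst 1); congr Ew; apply: funext => x; rewrite expr1n.
rewrite mul1r => h.
have : Ew (fun x => F x ^+ 2) <= Ew (fun=> N2 j).
  apply: Ew_le; [|exact: gi_cst|].
  - by apply: Bd_gi; under [X in Bd X]funext => x do rewrite expr2; exact: BdM.
  - move=> x _; apply: trig_cs; exact: cos2Dsin2.
rewrite Ew_cst => h2.
have h3 := le_trans h h2.
have := N2_ge0 j; nra.
Qed.

Lemma Ewc_inv m : cs m = Ew (cosf m). Proof. by rewrite Ewc. Qed.
Lemma Ews_inv m : sn m = Ew (sinf m). Proof. by rewrite Ews. Qed.

Lemma cs_neg j : cs (- j) = cs j.
Proof.
rewrite !Ewc_inv; congr Ew; apply: funext => x.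
by rewrite /cosf intrN -[RHS]cosN; congr cos; ring.
Qed.

Lemma sn_neg j : sn (- j) = - sn j.
Proof.
rewrite !Ews_inv.
have -> : sinf (- j) = (fun x => -1 * sinf j x).
  by apply: funext => x; rewrite /sinf intrN mulN1r -sinN; congr sin; ring.
by rewrite EwZ ?mulN1r //; exact: gis.
Qed.

Lemma phi_negt j y : phi (- j, true) y = phi (j, true) y.
Proof.
rewrite /phi /raw /vv /= cs_neg /cosf intrN.
have -> : 2 * pi * - j%:~R * y = - (2 * pi * j%:~R * y) by ring.
by rewrite cosN.
Qed.

Lemma phi_negf j y : phi (- j, false) y = - phi (j, false) y.
Proof.
rewrite /phi /raw /vv /= sn_neg /sinf intrN opprB -sinN.
have -> : 2 * pi * - j%:~R * y = - (2 * pi * j%:~R * y) by ring.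
by rewrite sinN opprK addrC.
Qed.

Lemma hker_Im0 y1 y2 : complex.Im (hker g k y1 y2) = 0.
Proof.
rewrite hker_Im.
set T := fun j => phi (j, false) y1 * phi (j, true) y2 - phi (j, true) y1 * phi (j, false) y2.
have e : \sum_(j <- Jk) T j = - \sum_(j <- Jk) T j.
  rewrite {1}(perm_big _ permJ) big_map -sumrN; apply: eq_bigr => j _.
  by rewrite /T !phi_negt !phi_negf; ring.
move: e; set X := \sum_(j <- Jk) T j; lra.
Qed.

Lemma cs0 : cs 0 = 1.
Proof.
rewrite Ewc_inv -[RHS](Ew_cst 1); congr Ew; apply: funext => x.
by rewrite /cosf mulr0 mul0r cos0.
Qed.

Lemma sn0 : sn 0 = 0.
Proof.
rewrite Ews_inv -[RHS](Ew_cst 0); congr Ew; apply: funext => x.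
by rewrite /sinf mulr0 mul0r sin0.
Qed.

Lemma N20 : N2 0 = 1.
Proof. by rewrite /N2 cs0 sn0 expr1n expr0n addr0. Qed.

Lemma phi_sq_le4 j y : phi (j, true) y ^+ 2 + phi (j, false) y ^+ 2 <= 4.
Proof.
rewrite /phi /raw /vv /=.
have h := N2le1 j; rewrite /N2 in h.
have hc := cos2Dsin2 (2 * pi * j%:~R * y).
have := @trig_cs (cs j) (sn j) _ _ hc.
rewrite /cosf /sinf.
set a := cos _; set b := sin _.
move=> h2.
have h3 : - 1 <= cs j * a + sn j * b.
  case: (lerP 0 (cs j * a + sn j * b)) => [h0|h0]; first by lra.
  have : (cs j * a + sn j * b) ^+ 2 <= 1 by lra.
  nra.
have -> : (a - cs j) ^+ 2 + (b - sn j) ^+ 2 =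
  (a ^+ 2 + b ^+ 2) - 2 * (cs j * a + sn j * b) + (cs j ^+ 2 + sn j ^+ 2) by ring.
rewrite hc; lra.
Qed.

Lemma term_le4 j y1 y2 :
  `|phi (j, true) y1 * phi (j, true) y2 + phi (j, false) y1 * phi (j, false) y2| <= 4.
Proof.
apply: sq_le_sq => //; rewrite real_normK ?num_real //.
have h := CS4 (phi (j, true) y1) (phi (j, false) y1) 0 0
               (phi (j, true) y2) (phi (j, false) y2) 0 0.
rewrite !mul0r !addr0 !expr0n !addr0 in h.
apply: (le_trans h).
have := phi_sq_le4 j y1; have := phi_sq_le4 j y2.
have := sqr_ge0 (phi (j, true) y1); have := sqr_ge0 (phi (j, false) y1).
have := sqr_ge0 (phi (j, true) y2); have := sqr_ge0 (phi (j, false) y2).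
nra.
Qed.

Lemma hr_bound y1 y2 : `|complex.Re (hker g k y1 y2)| <= 8 * k%:R.
Proof.
rewrite hker_Re.
apply: (le_trans (ler_norm_sum _ _ _)).
apply: (le_trans (y := \sum_(j <- Jk) 4)).
  by apply: ler_sum => j _; exact: term_le4.
rewrite sum_cst.
have : ((size Jk)%:R <= (2 * k)%:R :> R) by rewrite ler_nat; exact: sizeJ.
rewrite natrM; lra.
Qed.

Definition BB : seq bool := [:: true; false].
Definition Phi : seq (int * bool) := [seq (j, a) | j <- Jk, a <- BB].
Definition Gm (p q : int * bool) : R := MM p q - vv p * vv q.

Lemma sumPhi (F : int * bool -> R) :
  \sum_(p <- Phi) F p = \sum_(j <- Jk) (F (j, true) + F (j, false)).
Proof.
rewrite /Phi big_allpairs; apply: eq_bigr => j _.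
by rewrite /BB !big_cons big_nil /= addr0.
Qed.

Lemma hr_Phi y1 y2 : complex.Re (hker g k y1 y2) = \sum_(p <- Phi) phi p y1 * phi p y2.
Proof. by rewrite hker_Re sumPhi. Qed.

Lemma gi_phi p : gi (phi p). Proof. exact: Bd_gi (Bd_phi p). Qed.

Lemma E1 y2 : gi (fun y1 => complex.Re (hker g k y1 y2)) /\
  Ew (fun y1 => complex.Re (hker g k y1 y2)) = 0.
Proof.
have -> : (fun y1 => complex.Re (hker g k y1 y2)) =
    (fun y1 => \sum_(p <- Phi) phi p y2 * phi p y1).
  by apply: funext => y1; rewrite hr_Phi; apply: eq_bigr => p _; rewrite mulrC.
split; first by apply: gi_sum => p; apply: giZ; exact: gi_phi.
rewrite Ew_sum; last by move=> p; apply: giZ; exact: gi_phi.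
rewrite big1 // => p _; rewrite EwZ ?Ew_phi ?mulr0 //; exact: gi_phi.
Qed.

Lemma E2 y2 : gi (fun y1 => complex.Re (hker g k y1 y2) ^+ 2) /\
  Ew (fun y1 => complex.Re (hker g k y1 y2) ^+ 2) =
  \sum_(p <- Phi) \sum_(q <- Phi) (phi p y2 * phi q y2) * Gm p q.
Proof.
have -> : (fun y1 => complex.Re (hker g k y1 y2) ^+ 2) =
    (fun y1 => \sum_(p <- Phi) \sum_(q <- Phi) (phi p y2 * phi q y2) * (phi p y1 * phi q y1)).
  apply: funext => y1; rewrite hr_Phi expr2 big_distrl /=; apply: eq_bigr => p _.
  rewrite big_distrr /=; apply: eq_bigr => q _; ring.
have gpq : forall p q, gi (fun x => phi p x * phi q x).
  by move=> p q; apply: Bd_gi; exact: BdM (Bd_phi p) (Bd_phi q).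
split.
  apply: gi_sum => p; apply: gi_sum => q; exact: giZ.
rewrite Ew_sum; last by move=> p; apply: gi_sum => q; exact: giZ.
apply: eq_bigr => p _; rewrite Ew_sum; last by move=> q; exact: giZ.
by apply: eq_bigr => q _; rewrite EwZ // Gam.
Qed.

Lemma meas_phi p : measurable_fun (I01 : set R) (phi p).
Proof. by case: (Bd_phi p). Qed.

Lemma E3 : expect2 g (fun y1 y2 => complex.Re (hker g k y1 y2) ^+ 2) =
  (\sum_(p <- Phi) \sum_(q <- Phi) Gm p q ^+ 2)%:E.
Proof.
pose Ps := [seq (p, q) | p <- Phi, q <- Phi].
have -> : (fun y1 y2 => complex.Re (hker g k y1 y2) ^+ 2) =
  (fun y1 y2 => \sum_(r <- Ps) (fun r x => phi r.1 x * phi r.2 x) r y1 *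
                               (fun r x => phi r.1 x * phi r.2 x) r y2).
  apply: funext => y1; apply: funext => y2.
  rewrite hr_Phi expr2 big_distrl /= /Ps [in RHS]big_allpairs; apply: eq_bigr => p _.
  rewrite big_distrr /=; apply: eq_bigr => q _; ring.
rewrite expect2_sum.
- rewrite /Ps [in LHS]big_allpairs; congr EFin; apply: eq_bigr => p _ /=; apply: eq_bigr => q _ /=.
  by rewrite /= Gam expr2.
- by move=> r; apply: measurable_funM; exact: meas_phi.
- by move=> r; apply: measurable_funM; exact: meas_phi.
- by move=> r; apply: Bd_gi; exact: BdM (Bd_phi _) (Bd_phi _).
- by move=> r; apply: Bd_gi; exact: BdM (Bd_phi _) (Bd_phi _).
Qed.

Lemma E4 (z xi : R -> R) : L2 z -> L2 xi ->
  expect2 g (fun y1 y2 => complex.Re (hker g k y1 y2) * z y1 * xi y2) =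
  (\sum_(p <- Phi) Ew (fun x => z x * phi p x) * Ew (fun x => xi x * phi p x))%:E.
Proof.
move=> hz hxi.
have -> : (fun y1 y2 => complex.Re (hker g k y1 y2) * z y1 * xi y2) =
  (fun y1 y2 => \sum_(p <- Phi) (fun p x => z x * phi p x) p y1 *
                               (fun p x => xi x * phi p x) p y2).
  apply: funext => y1; apply: funext => y2.
  rewrite hr_Phi !big_distrl /=; apply: eq_bigr => p _; ring.
rewrite expect2_sum //.
- by move=> p; apply: measurable_funM; [case: hz|exact: meas_phi].
- by move=> p; apply: measurable_funM; [case: hxi|exact: meas_phi].
- by move=> p; exact: L2Bd_gi hz (Bd_phi p).
- by move=> p; exact: L2Bd_gi hxi (Bd_phi p).
Qed.

Definition Ssum : R := \sum_(m <- Mseq (2 * k)) N2 m.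
Definition G1 : R := \sum_(m <- Mseq (2 * k)) Nm m.
Definition nJ : R := (size Jk)%:R.

Lemma sum_map_le (u : int -> int) (f : int -> R) : injective u ->
  (forall j, j \in Jk -> (`|u j| <= 2 * k)%N) -> (forall x, 0 <= f x) ->
  \sum_(j <- Jk) f (u j) <= \sum_(m <- Mseq (2 * k)) f m.
Proof.
move=> iu hu f0; rewrite -(big_map u predT f).
apply: sub_sum => //; [by rewrite map_inj_uniq ?uniqJ| |exact: uniqM].
by move=> x /mapP [j hj ->]; rewrite memM; exact: hu.
Qed.

Lemma sumJ_le (f : int -> R) : (forall x, 0 <= f x) ->
  \sum_(j <- Jk) f j <= \sum_(m <- Mseq (2 * k)) f m.
Proof.
move=> f0; have := @sum_map_le id f (fun a b h => h) _ f0; apply.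
by move=> j; rewrite memJ; lia.
Qed.

Lemma sumJ_shift (f : int -> R) (c : int) (b : bool) : c \in Jk -> (forall x, 0 <= f x) ->
  \sum_(j <- Jk) f (if b then j - c else j + c) <= \sum_(m <- Mseq (2 * k)) f m.
Proof.
move=> hc f0; apply: sum_map_le => //.
  by case: b => x y /= h; lia.
move=> j hj; move: hc hj; rewrite !memJ; case: b => /=; lia.
Qed.

Lemma sumJ_shift' (f : int -> R) (c : int) (b : bool) : c \in Jk -> (forall x, 0 <= f x) ->
  \sum_(j <- Jk) f (if b then c - j else c + j) <= \sum_(m <- Mseq (2 * k)) f m.
Proof.
move=> hc f0; apply: sum_map_le => //.
  by case: b => x y /= h; lia.
move=> j hj; move: hc hj; rewrite !memJ; case: b => /=; lia.
Qed.

Lemma ler_sum_in {I : eqType} (s : seq I) (F G : I -> R) :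
  (forall i, i \in s -> F i <= G i) -> \sum_(i <- s) F i <= \sum_(i <- s) G i.
Proof. by move=> h; rewrite big_seq [X in _ <= X]big_seq; apply: ler_sum. Qed.

Lemma nJ_ge0 : 0 <= nJ. Proof. exact: ler0n. Qed.
Lemma nJ_le : nJ <= 2 * k%:R.
Proof. by rewrite /nJ -natrM ler_nat; exact: sizeJ. Qed.
Lemma S_ge0 : 0 <= Ssum. Proof. by apply: sumr_ge0 => m _; exact: N2_ge0. Qed.

Lemma sumPhi2 (F : int * bool -> int * bool -> R) :
  \sum_(p <- Phi) \sum_(q <- Phi) F p q = \sum_(j <- Jk) \sum_(l <- Jk)
   (F (j, true) (l, true) + F (j, true) (l, false) + F (j, false) (l, true) + F (j, false) (l, false)).
Proof.
rewrite sumPhi; apply: eq_bigr => j _; rewrite !sumPhi -big_split /=.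
by apply: eq_bigr => l _; ring.
Qed.

Definition Qb (j l : int) : R := Gm (j, true) (l, true) ^+ 2 + Gm (j, true) (l, false) ^+ 2 +
  Gm (j, false) (l, true) ^+ 2 + Gm (j, false) (l, false) ^+ 2.

Lemma Qb_le j l : Qb j l <= N2 (j - l) + N2 (j + l) + N2 j + N2 l.
Proof.
have := block_ineq (cs (j - l)) (sn (j - l)) (cs (j + l)) (sn (j + l)) (cs j) (sn j) (cs l) (sn l) (N2le1 j) (N2le1 l).
by rewrite /Qb /Gm /MM /vv /N2 /=.
Qed.

Lemma sumQ : \sum_(j <- Jk) \sum_(l <- Jk) Qb j l <= 4 * nJ * Ssum.
Proof.
apply: (le_trans (y := \sum_(j <- Jk) (Ssum + Ssum + nJ * N2 j + Ssum))).
  apply: ler_sum_in => j hj.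
  apply: (le_trans (y := \sum_(l <- Jk) (N2 (j - l) + N2 (j + l) + N2 j + N2 l))).
    by apply: ler_sum => l _; exact: Qb_le.
  rewrite big_split big_split big_split /= sum_cst -/nJ.
  have h1 := sumJ_shift' N2 j true hj N2_ge0.
  have h2 := sumJ_shift' N2 j false hj N2_ge0.
  have h3 := sumJ_le N2 N2_ge0.
  rewrite /= in h1 h2; rewrite /Ssum; lra.
rewrite big_split big_split big_split /= !sum_cst -/nJ -mulr_sumr.
have h3 := sumJ_le N2 N2_ge0; rewrite -/Ssum in h3.
have := nJ_ge0.
nra.
Qed.

Lemma Fsum_le : \sum_(p <- Phi) \sum_(q <- Phi) Gm p q ^+ 2 <= 4 * nJ * Ssum.
Proof. by rewrite sumPhi2; exact: sumQ. Qed.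

Definition Xy (y : R) : R := \sum_(p <- Phi) \sum_(q <- Phi) (phi p y * phi q y) * Gm p q.

Lemma X_sq y : Xy y ^+ 2 <= 64 * nJ ^+ 3 * Ssum.
Proof.
rewrite /Xy sumPhi2.
pose T j l := phi (j, true) y * phi (l, true) y * Gm (j, true) (l, true) +
  phi (j, true) y * phi (l, false) y * Gm (j, true) (l, false) +
  phi (j, false) y * phi (l, true) y * Gm (j, false) (l, true) +
  phi (j, false) y * phi (l, false) y * Gm (j, false) (l, false).
change ((\sum_(j <- Jk) \sum_(l <- Jk) T j l) ^+ 2 <= 64 * nJ ^+ 3 * Ssum).
have hT : forall j l, T j l ^+ 2 <= 16 * Qb j l.
  move=> j l; rewrite /T.
  set a1 := phi (j, true) y * phi (l, true) y; set a2 := phi (j, true) y * phi (l, false) y.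
  set a3 := phi (j, false) y * phi (l, true) y; set a4 := phi (j, false) y * phi (l, false) y.
  have h := CS4 a1 a2 a3 a4 (Gm (j, true) (l, true)) (Gm (j, true) (l, false))
                (Gm (j, false) (l, true)) (Gm (j, false) (l, false)).
  apply: (le_trans h); rewrite -/(Qb j l).
  have hq : 0 <= Qb j l by rewrite /Qb !addr_ge0 ?sqr_ge0.
  suff hs : a1 ^+ 2 + a2 ^+ 2 + a3 ^+ 2 + a4 ^+ 2 <= 16 by nra.
  have -> : a1 ^+ 2 + a2 ^+ 2 + a3 ^+ 2 + a4 ^+ 2 =
    (phi (j, true) y ^+ 2 + phi (j, false) y ^+ 2) * (phi (l, true) y ^+ 2 + phi (l, false) y ^+ 2).
    by rewrite /a1 /a2 /a3 /a4; ring.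
  have := phi_sq_le4 j y; have := phi_sq_le4 l y.
  have := sqr_ge0 (phi (j, true) y); have := sqr_ge0 (phi (j, false) y).
  have := sqr_ge0 (phi (l, true) y); have := sqr_ge0 (phi (l, false) y).
  nra.
apply: (le_trans (CS_ones _ _)); rewrite -/nJ.
apply: (le_trans (y := nJ * \sum_(j <- Jk) (nJ * \sum_(l <- Jk) T j l ^+ 2))).
  by apply: ler_wpM2l; [exact: nJ_ge0|apply: ler_sum => j _; exact: CS_ones].
rewrite -mulr_sumr mulrA.
apply: (le_trans (y := nJ * nJ * \sum_(j <- Jk) \sum_(l <- Jk) (16 * Qb j l))).
  apply: ler_wpM2l; first by rewrite mulr_ge0 ?nJ_ge0.
  by apply: ler_sum => j _; apply: ler_sum => l _; exact: hT.
have e : \sum_(j <- Jk) \sum_(l <- Jk) (16 * Qb j l) = 16 * \sum_(j <- Jk) \sum_(l <- Jk) Qb j l.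
  by rewrite mulr_sumr; apply: eq_bigr => j _; rewrite mulr_sumr.
rewrite e.
have := sumQ; have := nJ_ge0; have := S_ge0.
set Q := \sum_(j <- Jk) \sum_(l <- Jk) Qb j l.
move=> h0 h1 h2.
have h3 : 0 <= nJ * nJ * 16 by rewrite !mulr_ge0 ?nJ_ge0.
have := ler_wpM2l h3 h2.
move=> h4.
have -> : nJ * nJ * (16 * Q) = nJ * nJ * 16 * Q by ring.
apply: (le_trans h4); rewrite le_eqVlt; apply/orP; left; apply/eqP; ring.
Qed.

Definition SA (a : int * bool -> R) : R := \sum_(p <- Phi) a p ^+ 2.
Definition Qa (a : int * bool -> R) : R := \sum_(p <- Phi) \sum_(q <- Phi) a p * a q * Gm p q.
Definition Ma (a : int * bool -> R) : R := \sum_(p <- Phi) \sum_(q <- Phi) a p * a q * MM p q.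
Definition Fsum : R := \sum_(p <- Phi) \sum_(q <- Phi) Gm p q ^+ 2.

Lemma eqle (x y : R) : x = y -> x <= y. Proof. by move=> ->. Qed.

Lemma SA_ge0 a : 0 <= SA a. Proof. by apply: sumr_ge0 => p _; exact: sqr_ge0. Qed.
Lemma Fsum_ge0 : 0 <= Fsum. Proof. by apply: sumr_ge0 => p _; apply: sumr_ge0 => q _; exact: sqr_ge0. Qed.

Lemma Qa_sq a : Qa a ^+ 2 <= SA a ^+ 2 * Fsum.
Proof.
rewrite /Qa /Fsum.
have flat : forall F : int * bool -> int * bool -> R,
  \sum_(p <- Phi) \sum_(q <- Phi) F p q = \sum_(r <- [seq (p, q) | p <- Phi, q <- Phi]) F r.1 r.2.
  by move=> F; rewrite [RHS]big_allpairs.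
rewrite !flat.
have h := CS_seq [seq (p, q) | p <- Phi, q <- Phi] (fun r => a r.1 * a r.2) (fun r => Gm r.1 r.2).
apply: (le_trans h); rewrite mulrC; apply: ler_wpM2r.
  by apply: sumr_ge0 => r _; exact: sqr_ge0.
rewrite [X in X <= _]big_allpairs /SA expr2 big_distrl /=; apply: eqle; apply: eq_bigr => p _.
rewrite big_distrr /=; apply: eq_bigr => q _; ring.
Qed.

Lemma Qa_le_Ma a : Qa a <= Ma a.
Proof.
have e : Qa a = Ma a - (\sum_(p <- Phi) a p * vv p) ^+ 2.
  rewrite /Qa /Ma expr2 big_distrl /= -sumrB; apply: eq_bigr => p _.
  rewrite big_distrr /= -sumrB; apply: eq_bigr => q _; rewrite /Gm; ring.
by rewrite e lerBlDr lerDl sqr_ge0.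
Qed.

Lemma Nm_ge0 m : 0 <= Nm m. Proof. exact: sqrtr_ge0. Qed.
Lemma cs_le_Nm m : `|cs m| <= Nm m.
Proof. by rewrite /Nm -sqrtr_sqr ler_sqrt ?N2_ge0 // /N2 lerDl sqr_ge0. Qed.
Lemma sn_le_Nm m : `|sn m| <= Nm m.
Proof. by rewrite /Nm -sqrtr_sqr ler_sqrt ?N2_ge0 // /N2 lerDr sqr_ge0. Qed.

Lemma G1_ge0 : 0 <= G1. Proof. by apply: sumr_ge0 => m _; exact: Nm_ge0. Qed.

Lemma Ma_le a : Ma a <= 2 * G1 * SA a.
Proof.
pose P j := a (j, true) ^+ 2 + a (j, false) ^+ 2.
pose W j l := (Nm (j - l) + Nm (j + l)) / 2.
have P0 : forall j, 0 <= P j by move=> j; rewrite /P addr_ge0 ?sqr_ge0.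
rewrite /Ma sumPhi2.
apply: (le_trans (y := \sum_(j <- Jk) \sum_(l <- Jk) W j l * (P j + P l))).
  apply: ler_sum => j _; apply: ler_sum => l _.
  have := @blockM_ineq _ _ _ _ _ _ (a (j, true)) (a (j, false)) (a (l, true)) (a (l, false))
    (cs_le_Nm (j - l)) (sn_le_Nm (j - l)) (cs_le_Nm (j + l)) (sn_le_Nm (j + l)).
  by rewrite /MM /W /P /=.
have e : \sum_(j <- Jk) \sum_(l <- Jk) W j l * (P j + P l) =
  \sum_(j <- Jk) P j * (\sum_(l <- Jk) W j l) + \sum_(l <- Jk) P l * (\sum_(j <- Jk) W j l).
  have e2 : \sum_(l <- Jk) P l * (\sum_(j <- Jk) W j l) =
            \sum_(j <- Jk) \sum_(l <- Jk) W j l * P l.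
    rewrite [RHS]exchange_big /=; apply: eq_bigr => l _; rewrite mulr_sumr.
    by apply: eq_bigr => j _; ring.
  rewrite e2 -big_split /=; apply: eq_bigr => j _.
  rewrite mulr_sumr -big_split /=; apply: eq_bigr => l _; ring.
rewrite e.
have hW1 : forall j, j \in Jk -> \sum_(l <- Jk) W j l <= G1.
  move=> j hj; rewrite /W -mulr_suml big_split /=.
  have := sumJ_shift' Nm j true hj Nm_ge0; have := sumJ_shift' Nm j false hj Nm_ge0.
  rewrite /= -/G1; lra.
have hW2 : forall l, l \in Jk -> \sum_(j <- Jk) W j l <= G1.
  move=> l hl; rewrite /W -mulr_suml big_split /=.
  have := sumJ_shift Nm l true hl Nm_ge0; have := sumJ_shift Nm l false hl Nm_ge0.
  rewrite /= -/G1; lra.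
have hSA : SA a = \sum_(j <- Jk) P j by rewrite /SA sumPhi.
have h1 : \sum_(j <- Jk) P j * (\sum_(l <- Jk) W j l) <= \sum_(j <- Jk) P j * G1.
  by apply: ler_sum_in => j hj; apply: ler_wpM2l; [exact: P0|exact: hW1].
have h2 : \sum_(l <- Jk) P l * (\sum_(j <- Jk) W j l) <= \sum_(l <- Jk) P l * G1.
  by apply: ler_sum_in => l hl; apply: ler_wpM2l; [exact: P0|exact: hW2].
rewrite -!mulr_suml -hSA in h1 h2.
lra.
Qed.

Lemma SA_Qa z : L2 z -> Ew (fun x => z x ^+ 2) <= 1 ->
  SA (fun p => Ew (fun x => z x * phi p x)) ^+ 2 <= Qa (fun p => Ew (fun x => z x * phi p x)).
Proof.
move=> hz hz1.
set a := fun p => Ew (fun x => z x * phi p x).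
pose Psi x := \sum_(p <- Phi) a p * phi p x.
have BPsi : Bd Psi by apply: Bd_sum => p; apply: BdZ; exact: Bd_phi.
have gzp : forall p, gi (fun x => z x * phi p x) by move=> p; exact: L2Bd_gi hz (Bd_phi p).
have e1 : SA a = Ew (fun x => z x * Psi x).
  have -> : (fun x => z x * Psi x) = (fun x => \sum_(p <- Phi) a p * (z x * phi p x)).
    by apply: funext => x; rewrite /Psi big_distrr /=; apply: eq_bigr => p _; ring.
  rewrite Ew_sum; last by move=> p; exact: giZ.
  by rewrite /SA; apply: eq_bigr => p _; rewrite EwZ // expr2.
have gpq : forall p q, gi (fun x => phi p x * phi q x).
  by move=> p q; apply: Bd_gi; exact: BdM (Bd_phi p) (Bd_phi q).
have e2 : Ew (fun x => Psi x ^+ 2) = Qa a.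
  have -> : (fun x => Psi x ^+ 2) =
      (fun x => \sum_(p <- Phi) \sum_(q <- Phi) (a p * a q) * (phi p x * phi q x)).
    apply: funext => x; rewrite /Psi expr2 big_distrl /=; apply: eq_bigr => p _.
    by rewrite big_distrr /=; apply: eq_bigr => q _; ring.
  rewrite Ew_sum; last by move=> p; apply: gi_sum => q; exact: giZ.
  apply: eq_bigr => p _; rewrite Ew_sum; last by move=> q; exact: giZ.
  by apply: eq_bigr => q _; rewrite EwZ // Gam.
have h := Ew_CS hz BPsi.
rewrite e1 -e2.
apply: (le_trans h).
have : 0 <= Ew (fun x => Psi x ^+ 2) by apply: Ew_ge0 => x _; exact: sqr_ge0.
have : 0 <= Ew (fun x => z x ^+ 2) by apply: Ew_ge0 => x _; exact: sqr_ge0.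
nra.
Qed.

Lemma SA_C a : SA a ^+ 2 <= Qa a -> SA a ^+ 2 <= Fsum.
Proof.
move=> h; have s0 := SA_ge0 a; have hq := Qa_sq a; have F0 := Fsum_ge0.
set s := SA a in h s0 hq *; set q := Qa a in h hq.
case: (eqVneq s 0) => [->|sn0]; first by rewrite expr0n.
have sp : 0 < s ^+ 2 by rewrite exprn_gt0 // lt_def sn0.
have h4 : s ^+ 2 * s ^+ 2 <= s ^+ 2 * Fsum.
  apply: (le_trans _ hq); rewrite -expr2.
  have q0 : 0 <= q by apply: le_trans h; exact: sqr_ge0.
  by rewrite ler_pXn2r ?nnegrE ?sqr_ge0.
by rewrite -(ler_pM2l sp).
Qed.

Lemma SA_L1 a : SA a ^+ 2 <= Qa a -> SA a <= 2 * G1.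
Proof.
move=> h; have s0 := SA_ge0 a; have h1 := le_trans h (le_trans (Qa_le_Ma a) (Ma_le a)).
have := G1_ge0; set s := SA a in s0 h1 *.
case: (eqVneq s 0) => [->|sn0 G0]; first by move=> G0; rewrite mulr_ge0.
have sp : 0 < s by rewrite lt_def sn0.
by move: h1; rewrite expr2 ler_pM2r.
Qed.

Lemma sum_ab_sq a b : (\sum_(p <- Phi) a p * b p) ^+ 2 <= SA a * SA b.
Proof. by rewrite mulrC; exact: CS_seq. Qed.

Lemma Re_norm_fcoef j : complex.Re `|fcoef g j| = Nm j.
Proof. by rewrite normc_def /=. Qed.

Lemma esum_ge_seq (f : int -> R) (s : seq int) : uniq s ->
  ((\sum_(i <- s) f i)%:E <= \esum_(j in [set: int]) (f j)%:E)%E.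
Proof.
move=> us; apply: esum_ge; exists [set` s]; first by split; [exact: finite_seq|by []].
by rewrite -fsbig_seq // sumEFin.
Qed.

Definition E2s : \bar R := (\esum_(j in [set: int]) (N2 j)%:E)%E.
Definition E1s : \bar R := (\esum_(j in [set: int]) (Nm j)%:E)%E.

Lemma E2s_ge0 : (0 <= E2s)%E.
Proof. by apply: esum_ge0 => j _; rewrite lee_fin N2_ge0. Qed.
Lemma E1s_ge0 : (0 <= E1s)%E.
Proof. by apply: esum_ge0 => j _; rewrite lee_fin Nm_ge0. Qed.

Lemma lp2E : lp_norm 2 g = (E2s `^ 2^-1)%E.
Proof.
rewrite /lp_norm /E2s; congr poweR; congr esum; apply: funext => j.
rewrite Re_norm_fcoef; congr EFin.
by rewrite (@powR_mulrn _ _ 2) ?Nm_ge0 // sqr_sqrtr ?N2_ge0.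
Qed.

Lemma lp1E : lp_norm 1 g = E1s.
Proof.
rewrite /lp_norm invr1 poweRe1; last by apply: esum_ge0 => j _; rewrite lee_fin powR_ge0.
rewrite /E1s; congr esum; apply: funext => j.
by rewrite Re_norm_fcoef powRr1 ?Nm_ge0.
Qed.

Lemma lp2_sq : (lp_norm 2 g * lp_norm 2 g = E2s)%E.
Proof.
rewrite lp2E poweR12_sqrt; last exact: E2s_ge0.
have := sqr_sqrte E2s_ge0; by rewrite expe2.
Qed.

Lemma lp2_ge0 : (0 <= lp_norm 2 g)%E.
Proof. by rewrite lp2E poweR_ge0. Qed.

Lemma S_le_E2 : ((Ssum)%:E <= E2s)%E.
Proof. exact: esum_ge_seq (uniqM _). Qed.
Lemma G1_le_E1 : ((G1)%:E <= E1s)%E.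
Proof. exact: esum_ge_seq (uniqM _). Qed.

Lemma S_ge1 : 1 <= Ssum.
Proof.
have := @sub_sum [:: 0%R] (Mseq (2 * k)) N2 erefl _ (uniqM _) N2_ge0.
rewrite big_cons big_nil addr0 N20; apply.
by move=> x; rewrite inE => /eqP ->; rewrite memM.
Qed.

Lemma k2_ge0 : 0 <= 2 * k%:R :> R. Proof. by rewrite mulr_ge0. Qed.

Lemma pow_half : powR (2 * k%:R : R) (1 / 2) ^+ 2 = 2 * k%:R.
Proof.
rewrite -(@powR_mulrn R _ 2 (powR_ge0 _ _)) -powRrM.
have -> : 1 / 2 * 2%:R = 1 :> R by field.
by rewrite powRr1 // k2_ge0.
Qed.

Lemma pow_34 : powR (2 * k%:R : R) (3 / 4) ^+ 4 = (2 * k%:R) ^+ 3.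
Proof.
rewrite -(@powR_mulrn R _ 4 (powR_ge0 _ _)) -powRrM.
have -> : 3 / 4 * 4%:R = 3%:R :> R by field.
by rewrite powR_mulrn // k2_ge0.
Qed.

Lemma k0_nJ : k = 0%N -> nJ = 0.
Proof. move=> k0; apply/eqP; rewrite eq_le nJ_ge0 andbT; have := nJ_le; rewrite k0 mulr0 //. Qed.

Lemma kpos_pow (r : R) : (0 < k)%N -> 0 < powR (2 * k%:R) r.
Proof. by move=> kp; apply: powR_gt0; rewrite mulr_gt0 // ltr0n. Qed.

Definition Cc : \bar R := (2%:E * lp_norm 2 g * (powR (2 * k%:R) (1 / 2))%:E)%E.
Definition Bc : \bar R := (3%:E * lp_norm 2 g * (powR (2 * k%:R) (3 / 4))%:E)%E.

Lemma Cc_ge0 : (0 <= Cc)%E.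
Proof. by rewrite /Cc !mule_ge0 ?lp2_ge0 // lee_fin powR_ge0. Qed.
Lemma Bc_ge0 : (0 <= Bc)%E.
Proof. by rewrite /Bc !mule_ge0 ?lp2_ge0 // lee_fin powR_ge0. Qed.

Lemma L_cases : lp_norm 2 g = +oo%E \/ exists l : R, 0 <= l /\ lp_norm 2 g = l%:E /\ Ssum <= l * l.
Proof.
have := lp2_ge0; have := lp2_sq; have := S_le_E2.
case: (lp_norm 2 g) => [l| |] //; [|by left].
move=> hS hL l0; right; exists l; split => //; split => //.
by rewrite -lee_fin EFinM hL.
Qed.

Lemma le_CC (x : R) : x <= 4 * nJ * Ssum -> (x%:E <= Cc * Cc)%E.
Proof.
move=> hx.
case: (posnP k) => [k0|kp].
  have := k0_nJ k0 => hn; rewrite hn mulr0 mul0r in hx.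
  by apply: (le_trans (y := 0%:E)); [rewrite lee_fin|rewrite mule_ge0 ?Cc_ge0].
case: L_cases => [Ly|[l [l0 [Ll hl]]]].
  rewrite /Cc Ly gt0_muley ?lte_fin // gt0_mulye ?lte_fin ?kpos_pow // mulyy.
  exact: leey.
rewrite /Cc Ll -!EFinM lee_fin.
have hp := pow_half; have hn := nJ_le; have hS := S_ge0; have hn0 := nJ_ge0.
set p := powR _ _ in hp *.
have -> : 2 * l * p * (2 * l * p) = 4 * (l * l) * p ^+ 2 by ring.
rewrite hp; apply: (le_trans hx).
have h1 : nJ * Ssum <= (2 * k%:R) * (l * l).
  apply: ler_pM => //; exact: (le_trans hS hl).
nra.
Qed.

Lemma le_C (x : R) : x ^+ 2 <= 4 * nJ * Ssum -> (x%:E <= Cc)%E.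
Proof.
move=> hx.
case: (posnP k) => [k0|kp].
  have := k0_nJ k0 => hn; rewrite hn mulr0 mul0r in hx.
  apply: (le_trans (y := 0%:E)); last exact: Cc_ge0.
  rewrite lee_fin; have := sqr_ge0 x; nra.
case: L_cases => [Ly|[l [l0 [Ll hl]]]].
  rewrite /Cc Ly gt0_muley ?lte_fin // gt0_mulye ?lte_fin ?kpos_pow //.
  exact: leey.
rewrite /Cc Ll -!EFinM lee_fin.
have hp := pow_half; have hn := nJ_le; have hS := S_ge0; have hn0 := nJ_ge0.
set p := powR _ _ in hp *.
have p0 : 0 <= p by rewrite /p powR_ge0.
apply: sq_le_sq; first by rewrite !mulr_ge0.
have -> : (2 * l * p) ^+ 2 = 4 * (l * l) * p ^+ 2 by ring.
rewrite hp; apply: (le_trans hx).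
have h1 : nJ * Ssum <= (2 * k%:R) * (l * l).
  apply: ler_pM => //; exact: (le_trans hS hl).
nra.
Qed.

Lemma le_BB (x : R) : 0 <= x -> x ^+ 2 <= 64 * nJ ^+ 3 * Ssum -> (x%:E <= Bc * Bc)%E.
Proof.
move=> x0 hx.
case: (posnP k) => [k0|kp].
  have := k0_nJ k0 => hn; rewrite hn expr0n /= mulr0 mul0r in hx.
  apply: (le_trans (y := 0%:E)); last by rewrite mule_ge0 ?Bc_ge0.
  rewrite lee_fin; have := sqr_ge0 x; nra.
case: L_cases => [Ly|[l [l0 [Ll hl]]]].
  rewrite /Bc Ly gt0_muley ?lte_fin // gt0_mulye ?lte_fin ?kpos_pow // mulyy.
  exact: leey.
rewrite /Bc Ll -!EFinM lee_fin.
have hp := pow_34; have hn := nJ_le; have hS := S_ge0; have hn0 := nJ_ge0.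
have S1 := S_ge1.
set p := powR _ _ in hp *.
have p0 : 0 <= p by rewrite /p powR_ge0.
apply: sq_le_sq; first by rewrite !mulr_ge0.
have -> : (3 * l * p * (3 * l * p)) ^+ 2 = 81 * (l * l) ^+ 2 * p ^+ 4 by ring.
rewrite hp; apply: (le_trans hx).
have hl2 : Ssum <= (l * l) ^+ 2.
  have ll1 : 1 <= l * l by exact: le_trans S1 hl.
  apply: (le_trans hl); rewrite expr2; rewrite ler_peMl //; exact: (le_trans ler01 ll1).
have hn3 : nJ ^+ 3 <= (2 * k%:R) ^+ 3 by rewrite lerXn2r // ?nnegrE // k2_ge0.
have h1 : nJ ^+ 3 * Ssum <= (2 * k%:R) ^+ 3 * (l * l) ^+ 2.
  by apply: ler_pM => //; rewrite exprn_ge0.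
nra.
Qed.

Lemma le_L1 (x : R) : x <= 2 * G1 -> (x%:E <= 4%:E * lp_norm 1 g)%E.
Proof.
move=> hx; rewrite lp1E.
apply: (le_trans (y := (4%:E * G1%:E)%E)).
  rewrite -EFinM lee_fin; have := G1_ge0; lra.
by rewrite lee_wpmul2l // G1_le_E1.
Qed.

Lemma eqleE (x y : \bar R) : x = y -> (x <= y)%E. Proof. by move=> ->. Qed.

Lemma L2_of {z : R -> R} : measurable_fun (I01 : set R) z ->
  (expect1 g (fun y => (z y ^+ 2)%R) <= 1)%E -> L2 z /\ Ew (fun x => z x ^+ 2) <= 1.
Proof.
move=> mz h1.
have mz2 : measurable_fun (I01 : set R) (fun y => z y ^+ 2).
  by under [X in measurable_fun _ X]funext => y do rewrite expr2; exact: measurable_funM.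
have iz : gi (fun x => z x ^+ 2).
  apply/integrableP; split; first exact: meas_fg mz2.
  apply: (le_lt_trans _ (lt_le_trans (ltry 1) (leey _))).
  apply: (le_trans _ h1); apply: eqleE; apply: eq_integral => x; rewrite inE => Ix.
  by rewrite /= ger0_norm // mulr_ge0 ?sqr_ge0 // g_ge0.
split; first by split.
by move: h1; rewrite (expect1E iz) lee_fin.
Qed.

Lemma complex_ext (z w : R[i]) : complex.Re z = complex.Re w -> complex.Im z = complex.Im w -> z = w.
Proof. by case: z => a b; case: w => c d /= -> ->. Qed.

Lemma sq_prod_le (a b c : R) : 0 <= a -> 0 <= b -> 0 <= c -> a ^+ 2 <= c -> b ^+ 2 <= c -> a * b <= c.
Proof.
move=> a0 b0 c0 ha hb; apply: sq_le_sq => //.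
rewrite exprMn; have := sqr_ge0 a; have := sqr_ge0 b.
have -> : c ^+ 2 = c * c by rewrite expr2.
by move=> h1 h2; apply: ler_pM.
Qed.

Lemma main_sec :
  let h : R -> R -> R[i] := hker g k in
  let hr : R -> R -> R := fun y1 y2 => complex.Re (h y1 y2) in
  let A : R := 8 * k%:R in
  let B : \bar R := (3%:E * lp_norm 2 g * (powR (2 * k%:R) (3 / 4))%:E)%E in
  let C : \bar R := (2%:E * lp_norm 2 g * (powR (2 * k%:R) (1 / 2))%:E)%E in
  let D : \bar R := C in
      (forall y1 y2, I01 y1 -> I01 y2 -> complex.Im (h y1 y2) = 0) /\
      (exists M : R, forall y1 y2, I01 y1 -> I01 y2 -> `|hr y1 y2| <= M) /\
      (forall y1 y2, I01 y1 -> I01 y2 -> h y1 y2 = h y2 y1) /\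
      (forall y2, I01 y2 -> expect1 g (fun y1 => hr y1 y2) = 0%E) /\
      (forall y1 y2, I01 y1 -> I01 y2 -> `|hr y1 y2| <= A) /\
      (forall y2, I01 y2 -> (expect1 g (fun y1 => (hr y1 y2 ^+ 2)%R) <= B * B)%E) /\
      (expect2 g (fun y1 y2 => (hr y1 y2 ^+ 2)%R) <= C * C)%E /\
      (forall zeta xi : R -> R,
         measurable_fun I01 zeta -> measurable_fun I01 xi ->
         (expect1 g (fun y => (zeta y ^+ 2)%R) <= 1)%E ->
         (expect1 g (fun y => (xi y ^+ 2)%R) <= 1)%E ->
         (expect2 g (fun y1 y2 => (hr y1 y2 * zeta y1 * xi y2)%R) <= D)%E) /\
      (L2w g = L2R ->
       forall zeta xi : R -> R,
         measurable_fun I01 zeta -> measurable_fun I01 xi ->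
         (expect1 g (fun y => (zeta y ^+ 2)%R) <= 1)%E ->
         (expect1 g (fun y => (xi y ^+ 2)%R) <= 1)%E ->
         (expect2 g (fun y1 y2 => (hr y1 y2 * zeta y1 * xi y2)%R)
            <= 4%:E * lp_norm 1 g)%E).
Proof.
move=> h hr A B C D.
have zx : forall zeta xi : R -> R,
         measurable_fun I01 zeta -> measurable_fun I01 xi ->
         (expect1 g (fun y => (zeta y ^+ 2)%R) <= 1)%E ->
         (expect1 g (fun y => (xi y ^+ 2)%R) <= 1)%E ->
   expect2 g (fun y1 y2 => (hr y1 y2 * zeta y1 * xi y2)%R) =
   (\sum_(p <- Phi) Ew (fun x => zeta x * phi p x) * Ew (fun x => xi x * phi p x))%:E /\
   SA (fun p => Ew (fun x => zeta x * phi p x)) ^+ 2 <= Qa (fun p => Ew (fun x => zeta x * phi p x)) /\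
   SA (fun p => Ew (fun x => xi x * phi p x)) ^+ 2 <= Qa (fun p => Ew (fun x => xi x * phi p x)).
  move=> z xi mz mxi hz hxi.
  have [Lz Ez] := L2_of mz hz; have [Lxi Exi] := L2_of mxi hxi.
  split; first exact: E4 Lz Lxi.
  by split; apply: SA_Qa.
split; first by move=> y1 y2 _ _; exact: hker_Im0.
split; first by exists (8 * k%:R) => y1 y2 _ _; exact: hr_bound.
split.
  move=> y1 y2 _ _; apply: complex_ext; last by rewrite /h !hker_Im0.
  rewrite /h !hker_Re; apply: eq_bigr => j _; ring.
split.
  move=> y2 _; have [gi0 e0] := E1 y2.
  by have := expect1E gi0; rewrite e0.
split; first by move=> y1 y2 _ _; exact: hr_bound.
split.
  move=> y2 _; have [gi2 e2] := E2 y2.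
  have := expect1E gi2; rewrite e2 -/(Xy y2) => ->.
  apply: le_BB; last exact: X_sq.
  rewrite /Xy -e2; apply: Ew_ge0 => x _; exact: sqr_ge0.
split; first by rewrite E3; apply: le_CC; exact: Fsum_le.
split.
  move=> z xi mz mxi hz hxi; have [-> [hA hB]] := zx z xi mz mxi hz hxi.
  apply: le_C; apply: (le_trans (sum_ab_sq _ _)); apply: (le_trans _ Fsum_le).
  apply: sq_prod_le; [exact: SA_ge0|exact: SA_ge0|exact: Fsum_ge0|exact: SA_C|exact: SA_C].
move=> _ z xi mz mxi hz hxi; have [-> [hA hB]] := zx z xi mz mxi hz hxi.
apply: le_L1; apply: sq_le_sq; first by rewrite mulr_ge0 ?G1_ge0.
apply: (le_trans (sum_ab_sq _ _)); rewrite expr2.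
apply: ler_pM; [exact: SA_ge0|exact: SA_ge0|exact: SA_L1|exact: SA_L1].
Qed.

End Integ.

Theorem corollaryA5 (R : realType) (g : R -> R) (k : nat) :
  is_density_L2 g ->
  let h : R -> R -> R[i] := hker g k in
  let hr : R -> R -> R := fun y1 y2 => complex.Re (h y1 y2) in
  let A : R := 8 * k%:R in
  let B : \bar R := (3%:E * lp_norm 2 g * (powR (2 * k%:R) (3 / 4))%:E)%E in
  let C : \bar R := (2%:E * lp_norm 2 g * (powR (2 * k%:R) (1 / 2))%:E)%E in
  let D : \bar R := C in
  (* h is real-valued *)
      (forall y1 y2, I01 y1 -> I01 y2 -> complex.Im (h y1 y2) = 0) /\
      (* h is bounded *)
      (exists M : R, forall y1 y2, I01 y1 -> I01 y2 -> `|hr y1 y2| <= M) /\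
      (* h is symmetric *)
      (forall y1 y2, I01 y1 -> I01 y2 -> h y1 y2 = h y2 y1) /\
      (* E[h(Y1, y2)] = 0 *)
      (forall y2, I01 y2 -> expect1 g (fun y1 => hr y1 y2) = 0%E) /\
      (* sup |h| <= A *)
      (forall y1 y2, I01 y1 -> I01 y2 -> `|hr y1 y2| <= A) /\
      (* sup_{y2} E h^2(Y1, y2) <= B^2 *)
      (forall y2, I01 y2 -> (expect1 g (fun y1 => (hr y1 y2 ^+ 2)%R) <= B * B)%E) /\
      (* E h^2(Y1, Y2) <= C^2 *)
      (expect2 g (fun y1 y2 => (hr y1 y2 ^+ 2)%R) <= C * C)%E /\
      (* the sup over zeta, xi is <= D *)
      (forall zeta xi : R -> R,
         measurable_fun I01 zeta -> measurable_fun I01 xi ->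
         (expect1 g (fun y => (zeta y ^+ 2)%R) <= 1)%E ->
         (expect1 g (fun y => (xi y ^+ 2)%R) <= 1)%E ->
         (expect2 g (fun y1 y2 => (hr y1 y2 * zeta y1 * xi y2)%R) <= D)%E) /\
      (* if L^2(g) = L^2_R, the same holds with D := 4 ||g_.||_{l^1} *)
      (L2w g = L2R ->
       forall zeta xi : R -> R,
         measurable_fun I01 zeta -> measurable_fun I01 xi ->
         (expect1 g (fun y => (zeta y ^+ 2)%R) <= 1)%E ->
         (expect1 g (fun y => (xi y ^+ 2)%R) <= 1)%E ->
         (expect2 g (fun y1 y2 => (hr y1 y2 * zeta y1 * xi y2)%R)
            <= 4%:E * lp_norm 1 g)%E).
Proof. by move=> hg; exact: main_sec. Qed.
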